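(* If $(A_n)_{n=0}^{\infty}$ is an Appell sequence, the following statements are equivalent: (a) for all integers $n\geq0$, $A_n=A^*_n$, i.e. the Appell sequence is self-dual; (b) for all partitions $\lambda$, $A_{\lambda}=A_{\lambda'}$, where $\lambda'$ is the conjugate partition; (c) for all even integers $n>0$, $c_n=0$.
   Context: An Appell sequence is a sequence of polynomials $(A_n)_{n\ge0}$ with $A_0=1$ and $A_n'=nA_{n-1}$ for $n\ge1$; it satisfies $\sum_k A_k(x)t^k/k!=e^{xt}f_A(t)$ with $f_A(0)=1$, and the constants $c_k$ are defined by $\log f_A(t)=\sum_{k\ge1}c_kt^k/k!$. For a partition $\lambda$ of length $r$, let $(n_1,\dots,n_r)=(\lambda_r,\lambda_{r-1}+1,\dots,\lambda_1+r-1)$ and $A_\lambda=\operatorname{Wr}[A_{n_1},\dots,A_{n_r}]/\Delta(n_1,\dots,n_r)$, where $\operatorname{Wr}$ is the Wronskian and $\Delta$ the Vandermonde determinant $\prod_{i<j}(x_j-x_i)$. The dual sequence is $A^*_n=A_{(1^n)}$, with $(1^n)=(1,\dots,1)$ ($n$ ones). *)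

(* Defs.v *)
From mathcomp Require Import all_boot all_order all_algebra.
Set Implicit Arguments. Unset Strict Implicit. Unset Printing Implicit Defensive.
Import GRing.Theory.
Local Open Scope ring_scope.

Section Appell.
Variable R : fieldType.

Definition is_appell (A : nat -> {poly R}) : Prop :=
  A 0%N = 1 /\ forall n : nat, (A n.+1)^`() = A n *+ n.+1.

(* f_A(t) = sum_k A_k(0) t^k/k!  (set x = 0 in the generating function);
   here truncated at degree k, as a polynomial in t. *)
Definition fA_trunc (A : nat -> {poly R}) (k : nat) : {poly R} :=
  \poly_(i < k.+1) ((A i).[0] / (i`!)%:R).

(* c_k = k! [t^k] log f_A(t), with log f = sum_{m>=1} (-1)^(m+1)/m (f-1)^m
   (formal power series; only m <= k and coefficients of degree <= k matter). *)
Definition appell_c (A : nat -> {poly R}) (k : nat) : R :=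
  (k`!)%:R *
  (\sum_(1 <= m < k.+1) (((-1) ^+ m.+1 / m%:R) *: (fA_trunc A k - 1) ^+ m))`_k.

End Appell.

Definition is_partition (l : seq nat) : bool :=
  sorted geq l && all (fun x => 0 < x)%N l.

Definition conj_part (l : seq nat) : seq nat :=
  mkseq (fun j => count (fun x => j.+1 <= x)%N l) (head 0%N l).

(* (n_1,...,n_r) = (l_r, l_{r-1}+1, ..., l_1 + r - 1), 0-indexed. *)
Definition part_degs (l : seq nat) (i : nat) : nat :=
  (nth 0%N l (size l - i.+1) + i)%N.

Section Wronskian.
Variable R : fieldType.

Definition wronskian (r : nat) (F : 'I_r -> {poly R}) : {poly R} :=
  \det (\matrix_(i < r, j < r) (F j)^`(i)).

Definition vandermonde (r : nat) (x : 'I_r -> R) : R :=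
  \prod_(i < r) \prod_(j < r | (i < j)%N) (x j - x i).

Definition A_part (A : nat -> {poly R}) (l : seq nat) : {poly R} :=
  (vandermonde (fun i : 'I_(size l) => (part_degs l i)%:R))^-1
    *: wronskian (fun i : 'I_(size l) => A (part_degs l i)).

Definition A_dual (A : nat -> {poly R}) (n : nat) : {poly R} :=
  A_part A (nseq n 1%N).

End Wronskian.

(* Main.v *)
Require Import Defs.
From mathcomp Require Import all_boot all_order all_algebra.
Set Implicit Arguments. Unset Strict Implicit. Unset Printing Implicit Defensive.
Import GRing.Theory.
From mathcomp Require Import ring zify.
From Stdlib Require Import FunctionalExtensionality.
Section Part.
Variable l : seq nat.
Hypothesis hs : sorted geq l.

Local Notation r := (size l).
Local Notation s := (head 0%N l).
Definition lam i := nth 0%N l i.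
Definition lamc b := count (fun x => b < x) l.

Lemma geq_tr : transitive geq.
Proof. by move=> ? ? ? /= h1 h2; exact: leq_trans h2 h1. Qed.

Lemma lam_mono i j : i <= j -> j < r -> lam j <= lam i.
Proof.
move=> ij jr; have := sorted_leq_nth geq_tr (fun x => leqnn x) 0 hs.
by move=> /(_ i j); apply => //; rewrite inE (leq_ltn_trans ij jr).
Qed.

Lemma lam_le_s i : lam i <= s.
Proof.
case: (ltnP i r) => ir.
  by rewrite -nth0; apply: lam_mono.
by rewrite /lam nth_default.
Qed.

Lemma lamc_ge b i : i < r -> b < lam i -> i < lamc b.
Proof.
move=> ir bi; rewrite /lamc -(cat_take_drop i.+1 l) count_cat.
have : count (fun x => b < x) (take i.+1 l) = i.+1.
  have H : all (fun x => b < x) (take i.+1 l).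
    apply/(all_nthP 0) => k; rewrite size_takel // => kl.
    rewrite nth_take //; apply: (leq_trans bi); apply: lam_mono => //.
  by rewrite all_count in H; rewrite (eqP H) size_takel.
by move=> ->; apply: leq_addr.
Qed.

Lemma lamc_le b i : i < r -> lam i <= b -> lamc b <= i.
Proof.
move=> ir ib; rewrite /lamc -(cat_take_drop i l) count_cat.
have -> : count (fun x => b < x) (drop i l) = 0.
  apply/eqP; rewrite -leqn0 leqNgt -has_count; apply/hasPn => x /(nthP 0) [k kl <-].
  rewrite size_drop in kl; rewrite nth_drop -leqNgt; apply: leq_trans ib.
  apply: lam_mono; [exact: leq_addr | by rewrite -ltn_subRL].
by rewrite addn0; apply: leq_trans (count_size _ _) _; rewrite size_take; case: ltnP => // /ltnW.
Qed.

Lemma lamc_r b : lamc b <= r.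
Proof. exact: count_size. Qed.

Lemma lamc_mono b b' : b <= b' -> lamc b' <= lamc b.
Proof. by move=> bb; apply: sub_count => x /= h; exact: leq_ltn_trans bb h. Qed.

Definition nd j := (lam (r - j.+1) + j)%N.
Definition md b := (r + b - lamc b)%N.
Definition gnat k := if k < r then nd k else md (k - r).

Lemma nd_lt j : j < r -> nd j < r + s.
Proof. by move=> jr; rewrite /nd; have := lam_le_s (r - j.+1); lia. Qed.

Lemma nd_mono j j' : j < j' -> j' < r -> nd j < nd j'.
Proof.
move=> jj jr; rewrite /nd; have := lam_mono (i := r - j'.+1) (j := r - j.+1).
have h1 : r - j'.+1 <= r - j.+1 by lia.
have h2 : r - j.+1 < r by lia.
by move=> /(_ h1 h2); lia.
Qed.

Lemma md_lt b : b < s -> md b < r + s.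
Proof. by rewrite /md; lia. Qed.

Lemma md_mono b b' : b < b' -> md b < md b'.
Proof.
move=> bb; rewrite /md; have := lamc_mono (ltnW bb); have := lamc_r b; have := lamc_r b'; lia.
Qed.

Lemma nd_md j b : j < r -> nd j != md b.
Proof.
move=> jr; rewrite /nd /md; set i := r - j.+1.
have ir : i < r by rewrite /i; lia.
have ji : j = r - i.+1 by rewrite /i; lia.
case: (ltnP b (lam i)) => bi.
  have := lamc_ge ir bi; have := lamc_r b; lia.
have := lamc_le ir bi; lia.
Qed.

Lemma gnat_lt k : k < r + s -> gnat k < r + s.
Proof.
rewrite /gnat; case: (ltnP k r) => kr ks; first exact: nd_lt.
by apply: md_lt; lia.
Qed.

Lemma gnat_inj k k' : k < r + s -> k' < r + s -> gnat k = gnat k' -> k = k'.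
Proof.
move=> ks ks'; rewrite /gnat.
wlog kk : k k' ks ks' / k <= k'.
  move=> W; case: (leqP k k') => h; first exact: W.
  by move=> e; apply/esym; apply: (W k' k ks' ks (ltnW h)); rewrite e.
case: (ltnP k r) => kr; case: (ltnP k' r) => kr' e.
- case: (ltngtP k k') => // h; first by have := nd_mono h kr'; rewrite e ltnn.
  lia.
- by move: e => /eqP; rewrite (negbTE (nd_md _ kr)).
- lia.
- case: (ltngtP k k') => // h; last lia.
  have : k - r < k' - r by lia.
  by move/md_mono; rewrite e ltnn.
Qed.

End Part.

Local Open Scope ring_scope.

Section Basics.
Variable R : fieldType.
Hypothesis hR : [pchar R] =i pred0.

Lemma natf_neq0c n : (0 < n)%N -> (n%:R : R) != 0.
Proof. by move=> n0; move/pcharf0P: hR => ->; rewrite -lt0n. Qed.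

Lemma fact_neq0 n : (n`!%:R : R) != 0.
Proof. exact/natf_neq0c/fact_gt0. Qed.

Lemma natf_inj m n : (m%:R : R) = n%:R -> m = n.
Proof.
move=> e; apply/eqP.
wlog le : m n e / (m <= n)%N.
  by move=> W; case: (leqP m n) => [|/ltnW] h; [apply: W | rewrite eq_sym; apply: W].
have : ((n - m)%:R : R) == 0 by rewrite natrB // e subrr.
move/pcharf0P: hR => -> ; rewrite subn_eq0 => h2; by rewrite eqn_leq le h2.
Qed.

Variable A : nat -> {poly R}.
Hypothesis hA : is_appell A.

Lemma appell_derivn n i : (A n)^`(i) = A (n - i) *+ n ^_ i.
Proof.
case: hA => A0 AS.
elim: i => [|i IH]; first by rewrite subn0 ffactn0 mulr1n.
rewrite derivnS IH derivMn ffactnSr.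
case e: (n - i)%N => [|m].
  by rewrite A0 derivC mul0rn muln0 mulr0n.
rewrite AS -mulrnA subnS e /= mulnC.
by [].
Qed.


Definition hh k : {poly R} := (k`!%:R)^-1 *: A k.

Lemma hh0 : hh 0 = 1.
Proof. by case: hA => A0 _; rewrite /hh A0 fact0 invr1 scale1r. Qed.

Lemma hh_deriv k : (hh k.+1)^`() = hh k.
Proof.
case: hA => _ AS; rewrite /hh derivZ AS -scaler_nat scalerA factS natrM.
rewrite invfM mulrAC mulVf ?mul1r //; exact: natf_neq0c.
Qed.

End Basics.

Section Ebar.
Variable R : comPzRingType.
Variable h : nat -> R.

Fixpoint ebs (n : nat) : seq R :=
  match n with
  | 0 => [:: 1]
  | n'.+1 => let s := ebs n' in rcons s (- \sum_(t < n'.+1) h t.+1 * nth 0 s (n' - t))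
  end.

Definition ebar n := nth 0 (ebs n) n.

Lemma size_ebs n : size (ebs n) = n.+1.
Proof. by elim: n => [|n IH] //=; rewrite size_rcons IH. Qed.

Lemma nth_ebs n i : (i <= n)%N -> nth 0 (ebs n) i = ebar i.
Proof.
elim: n => [|n IH]; first by rewrite leqn0 => /eqP ->.
rewrite leq_eqVlt => /orP[/eqP -> //| lt]; rewrite /= nth_rcons size_ebs lt IH //.
Qed.

Lemma ebar0 : ebar 0 = 1. Proof. by []. Qed.

Lemma ebarS n : ebar n.+1 = - \sum_(t < n.+1) h t.+1 * ebar (n - t).
Proof.
rewrite /ebar /= nth_rcons size_ebs ltnn eqxx; congr (- _); apply: eq_bigr => t _.
by rewrite nth_ebs // leq_subr.
Qed.

Hypothesis h0 : h 0 = 1.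

Lemma ebar_conv n : \sum_(t < n.+1) h t * ebar (n - t) = (n == 0)%:R.
Proof.
case: n => [|n]; first by rewrite big_ord1 h0 mul1r.
rewrite big_ord_recl h0 mul1r subn0 ebarS /= addrC; apply/eqP; rewrite addr_eq0 opprK; apply/eqP.
by apply: eq_bigr => t _; rewrite /bump /= add1n subSS.
Qed.

End Ebar.

Section Dual.
Variable R : fieldType.
Hypothesis hR : [pchar R] =i pred0.
Variable A : nat -> {poly R}.
Hypothesis hA : is_appell A.

Local Notation hh := (hh A).
Local Notation eb := (ebar hh).

Lemma deriv1p : (1 : {poly R})^`() = 0.
Proof. by rewrite -polyC1 derivC. Qed.

Lemma eb_deriv n : (eb n.+1)^`() = - eb n.
Proof.
elim/ltn_ind: n => n IH.
rewrite ebarS derivN raddf_sum /=.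
under eq_bigr => t _ do rewrite derivM (hh_deriv hR hA).
rewrite big_split /= (ebar_conv (hh0 hA)).
case: n IH => [|m] IH.
  by rewrite big_ord1 subnn ebar0 deriv1p mulr0 addr0.
rewrite /= add0r big_ord_recr /= subnn ebar0 deriv1p mulr0 addr0.
have E (t : 'I_m.+1) : hh t.+1 * (ebar hh (m.+1 - t))^`() = - (hh t.+1 * ebar hh (m - t)).
  rewrite subSn; last by rewrite -ltnS.
  by rewrite IH ?mulrN // ltnS leq_subr.
rewrite (eq_bigr _ (fun t _ => E t)).
by rewrite sumrN opprK ebarS opprK.
Qed.


Definition Bd n : {poly R} := (n`!%:R * (-1) ^+ n) *: eb n.

Lemma Bd_appell : is_appell Bd.
Proof.
split; first by rewrite /Bd ebar0 fact0 expr0 mulr1 scale1r.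
move=> n; rewrite /Bd derivZ eb_deriv scalerN -scaleNr -scaler_nat scalerA.
congr (_ *: _); rewrite factS natrM exprS; ring.
Qed.

End Dual.

Section Toep.
Variable S : comPzRingType.
Variables h e : nat -> S.
Hypothesis conv : forall n, \sum_(t < n.+1) h t * e (n - t)%N = (n == 0)%:R.

Definition toep N (f : nat -> S) : 'M[S]_N :=
  \matrix_(i < N, k < N) (if (i <= k)%N then f (k - i)%N else (0 : S)).

Lemma toep_mul N : toep N h *m toep N e = 1%:M.
Proof.
apply/matrixP => i j; rewrite !mxE.
pose F k := (if (i <= k)%N then h (k - i)%N else 0) * (if (k <= j)%N then e (j - k)%N else 0).
transitivity (\sum_(0 <= k < N) F k).
  by rewrite big_mkord; apply: eq_bigr => k _; rewrite !mxE.
case: (leqP i j) => ij; last first.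
  rewrite big1_seq; last first.
    move=> k _; rewrite /F; case: (leqP i k) => ik; last by rewrite mul0r.
    by rewrite leqNgt (leq_trans ij ik) mulr0.
  by rewrite -(inj_eq val_inj) /= gtn_eqF.
have iN : (i <= j.+1)%N by apply: leqW.
have jN : (j.+1 <= N)%N by apply: ltn_ord.
rewrite (big_cat_nat (n := i)) //=; last exact: leq_trans iN jN.
rewrite big1_seq ?add0r; last first.
  move=> k; rewrite mem_index_iota /F => /andP[_ /andP[_ ki]]; by rewrite leqNgt ki mul0r.
rewrite (big_cat_nat (n := j.+1)) //=.
rewrite [X in _ + X]big1_seq ?addr0; last first.
  move=> k; rewrite mem_index_iota /F => /andP[_ /andP[jk _]]; by rewrite [(k <= j)%N]leqNgt jk mulr0.
rewrite -{1}(add0n i) (big_addn 0 j.+1 i xpredT) subSn // big_mkord.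
rewrite (eq_bigr (fun t : 'I_(j - i).+1 => h t * e ((j - i) - t)%N)); last first.
  move=> t _; rewrite /F leq_addl addnK.
  have tj : (t + i <= j)%N by have := ltn_ord t; lia.
  by rewrite tj subnDA subnAC.
rewrite conv subn_eq0 -(inj_eq val_inj) /= eqn_leq ij.
by [].
Qed.

End Toep.

Section Block.
Variable S : comPzRingType.

Lemma block_det r s (X Y : 'M[S]_(r + s)) :
  X *m Y = 1%:M -> \det (ulsubmx X) = \det X * \det (drsubmx Y).
Proof.
move=> XY.
have : block_mx (ulsubmx X) (ursubmx X) (dlsubmx X) (drsubmx X) *m
       block_mx (ulsubmx Y) (ursubmx Y) (dlsubmx Y) (drsubmx Y) = block_mx 1%:M 0 0 1%:M.
  by rewrite !submxK XY scalar_mx_block.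
rewrite mulmx_block => /eq_block_mx [_ E2 _ E4].
have key : X *m block_mx 1%:M (ursubmx Y) 0 (drsubmx Y) = block_mx (ulsubmx X) 0 (dlsubmx X) 1%:M.
  by rewrite -{1}[X]submxK mulmx_block !mulmx1 !mulmx0 !addr0 E2 E4.
have := congr1 determinant key.
by rewrite det_mulmx det_ublock det_lblock !det1 mul1r mulr1 => ->.
Qed.

End Block.

Section Reindex.
Variable S : comPzRingType.

Lemma det_reindex k (N : 'M[S]_k) (p q : 'I_k -> 'I_k) (al be : 'I_k -> S) :
  \det (\matrix_(i, j) (al i * be j * N (p i) (q j))) =
  (\prod_i al i) * (\prod_j be j) * \det (rowsub p (1%:M : 'M[S]_k)) *
  \det (colsub q (1%:M : 'M[S]_k)) * \det N.
Proof.
have -> : \matrix_(i, j) (al i * be j * N (p i) (q j)) =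
   diag_mx (\row_i al i) *m (rowsub p 1%:M *m (N *m colsub q 1%:M)) *m diag_mx (\row_j be j).
  rewrite mulmx_colsub mulmx1 -rowsubE -mxsubrc mul_diag_mx mul_mx_diag.
  by apply/matrixP => i j; rewrite !mxE; ring.
rewrite !det_mulmx !det_diag.
have E1 : \prod_i (\row_i al i) 0 i = \prod_i al i by apply: eq_bigr => i _; rewrite mxE.
have E2 : \prod_i (\row_i be i) 0 i = \prod_i be i by apply: eq_bigr => i _; rewrite mxE.
rewrite E1 E2; ring.
Qed.

End Reindex.


Section Deriv.
Variable R : fieldType.
Hypothesis hR : [pchar R] =i pred0.
Variable A : nat -> {poly R}.
Hypothesis hA : is_appell A.

Lemma A_derivn n i : (A n)^`(i) = if (i <= n)%N then (n`!%:R : R) *: hh A (n - i) else 0.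
Proof.
rewrite (appell_derivn hA); case: leqP => ni; last by rewrite ffact_small // mulr0n.
rewrite /hh scalerA -(ffact_fact ni) natrM mulfK ?fact_neq0 //.
by rewrite scaler_nat.
Qed.

Lemma Bd_derivn n i : (Bd A n)^`(i) =
  if (i <= n)%N then ((n`!%:R : R) * (-1) ^+ (n - i)) *: ebar (hh A) (n - i) else 0.
Proof.
rewrite (appell_derivn (Bd_appell hR hA)); case: leqP => ni; last by rewrite ffact_small // mulr0n.
rewrite /Bd -scaler_nat scalerA -(ffact_fact ni) natrM; congr (_ *: _); ring.
Qed.

Lemma sign_aux (F : R) m t q : F^-1 * (-1) ^+ m * (-1) ^+ q * (F * (-1) ^+ t) =
  (F^-1 * F) * ((-1) ^+ (m + t) * (-1) ^+ q).
Proof. rewrite exprD; ring. Qed.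

End Deriv.

Section Key.
Variable R : fieldType.
Hypothesis hR : [pchar R] =i pred0.
Variable l : seq nat.
Hypothesis hs : sorted geq l.
Local Notation r := (size l).
Local Notation s := (head 0%N l).

Definition gord (k : 'I_(r + s)) : 'I_(r + s) := insubd k (gnat l k).

Lemma gord_val k : val (gord k) = gnat l k.
Proof. by rewrite val_insubd gnat_lt. Qed.

Lemma gord_inj : injective gord.
Proof.
move=> k k' /(congr1 val); rewrite !gord_val => /(gnat_inj hs (ltn_ord k) (ltn_ord k')).
exact: val_inj.
Qed.

Lemma sub1_polyC k (f g : 'I_k -> 'I_k) :
  \det (mxsub f g (1%:M : 'M[{poly R}]_k)) = (\det (mxsub f g (1%:M : 'M[R]_k)))%:P.
Proof.
have -> : mxsub f g (1%:M : 'M[{poly R}]_k) = map_mx polyC (mxsub f g 1%:M).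
  by apply/matrixP => i j; rewrite !mxE rmorph_nat.
by rewrite det_map_mx.
Qed.

Lemma pd_nd j : part_degs l j = nd l j.
Proof. by []. Qed.

Lemma pdc (a : 'I_s) : part_degs (conj_part l) (rev_ord a) = (lamc l a + (s - a.+1))%N.
Proof.
rewrite /part_degs /conj_part size_mkseq /= nth_mkseq; last by have := ltn_ord a; lia.
have -> : (s - (s - a.+1).+1 = a)%N by have := ltn_ord a; lia.
by [].
Qed.

Lemma key_wr : exists c : R, forall A, is_appell A ->
  wronskian (fun j : 'I_r => A (part_degs l j)) =
  c%:P * wronskian (fun j : 'I_s => Bd A (part_degs (conj_part l) j)).
Proof.
eexists => A hA.
set T := toep (r + s) (hh A); set U := toep (r + s) (ebar (hh A)).
have TU : T *m U = 1%:M := toep_mul (ebar_conv (hh0 hA)) _.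
set X := colsub gord T; set Y := rowsub gord U.
have XY : X *m Y = 1%:M.
  rewrite -TU; apply/matrixP => i j; rewrite !mxE; apply/esym.
  rewrite (reindex_inj gord_inj); apply: eq_bigr => k _; by rewrite !mxE.
have detT : \det T = 1.
  rewrite -det_tr det_trig; last first.
    by apply/is_trig_mxP => i j ij; rewrite !mxE leqNgt ij.
  by rewrite big1 // => i _; rewrite !mxE leqnn subnn (hh0 hA).
have detX : \det X = (\det (colsub gord (1%:M : 'M[R]_(r + s))))%:P.
  have -> : X = T *m colsub gord 1%:M by rewrite mulmx_colsub mulmx1.
  by rewrite det_mulmx detT mul1r sub1_polyC.
have hb := block_det XY.
have WA : wronskian (fun j : 'I_r => A (part_degs l j)) =
    (\prod_(j < r) ((nd l j)`!%:R : R))%:P * \det (ulsubmx X).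
  rewrite /wronskian.
  have -> : \matrix_(i < r, j < r) (A (part_degs l j))^`(i) =
      ulsubmx X *m diag_mx (\row_(j < r) ((nd l j)`!%:R : R)%:P).
    rewrite mul_mx_diag; apply/matrixP => i j; rewrite !mxE gord_val /gnat /= ltn_ord.
    rewrite (A_derivn hR hA) pd_nd; case: leqP => _; last by rewrite mul0r.
    by rewrite mulrC mul_polyC.
  rewrite det_mulmx det_diag mulrC rmorph_prod; congr (_ * _).
  by apply: eq_bigr => j _; rewrite mxE.
pose M := \matrix_(i < s, j < s) (Bd A (part_degs (conj_part l) j))^`(i).
pose al := fun a : 'I_s => (((lamc l a + (s - a.+1))`!%:R : R)^-1 * (-1) ^+ (md l a))%:P.
pose be := fun b : 'I_s => (((-1) ^+ (r + b)) : R)%:P.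
have WB : \det (drsubmx Y) = \det (\matrix_(a, b) (al a * be b * M^T (rev_ord a) (rev_ord b))).
  congr (\det _); apply/matrixP => a b; rewrite !mxE gord_val /gnat /= ltnNge leq_addr /= addKn.
  rewrite (Bd_derivn hR hA) pdc /=.
  have lr := lamc_r l a; have as_ := ltn_ord a; have bs := ltn_ord b.
  have cond : (md l a <= r + b)%N = (s - b.+1 <= lamc l a + (s - a.+1))%N.
    by apply/idP/idP; rewrite /md; lia.
  rewrite cond; case: ifP => h; last by rewrite mulr0.
  have idx : (r + b - md l a = lamc l a + (s - a.+1) - (s - b.+1))%N by rewrite /md; lia.
  have ex : (md l a + (lamc l a + (s - a.+1) - (s - b.+1)) = r + b)%N by rewrite /md; lia.
  rewrite idx /al /be -!polyCM mul_polyC scalerA.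
  set t := (lamc l a + (s - a.+1) - (s - b.+1))%N.
  set F := ((lamc l a + (s - a.+1))`!%:R : R).
  have F0 : F != 0 by apply: fact_neq0.
  rewrite sign_aux.
  by rewrite mulVf // ex -expr2 sqrr_sign mulr1 scale1r.
rewrite WA hb detX WB det_reindex det_tr !sub1_polyC /al /be -!rmorph_prod !mulrA -!polyCM.
reflexivity.
Qed.

End Key.


Section Vdm.
Variable R : fieldType.

Definition ffp (i : nat) : {poly R} := \prod_(t <- iota 0 i) ('X - (t%:R)%:P).

Lemma ffp_eval n i : (ffp i).[n%:R] = (n ^_ i)%:R.
Proof.
rewrite /ffp horner_prod.
elim: i => [|i IH]; first by rewrite big_nil ffactn0.
rewrite -addn1 iotaD big_cat /= big_seq1 IH hornerXsubC add0n addn1 ffactnSr natrM.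
case: (leqP i n) => h; first by rewrite natrB.
by rewrite ffact_small // !mul0r.
Qed.

Lemma det_ffact k (n : 'I_k -> nat) :
  \det (\matrix_(i < k, j < k) ((n j) ^_ i)%:R : 'M[R]_k) =
  \prod_(i < k) \prod_(j < k | (i < j)%N) ((n j)%:R - (n i)%:R).
Proof.
pose L : 'M[R]_k := \matrix_(i, m) (ffp i)`_m.
have -> : \matrix_(i < k, j < k) ((n j) ^_ i)%:R = L *m Vandermonde k (\row_j (n j)%:R).
  apply/matrixP => i j; rewrite !mxE -ffp_eval (horner_coef_wide _ (n := k)).
    by apply: eq_bigr => m _; rewrite !mxE.
  by rewrite size_prod_XsubC size_iota.
rewrite det_mulmx det_Vandermonde det_trig; last first.
  apply/is_trig_mxP => i m im; rewrite mxE nth_default //.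
  by rewrite size_prod_XsubC size_iota.
rewrite big1 ?mul1r; last first.
  move=> i _; rewrite mxE.
  have := lead_coef_prod_XsubC (iota 0 i) xpredT (fun t : nat => (t%:R : R)).
  by rewrite /lead_coef size_prod_XsubC size_iota.
by apply: eq_bigr => i _; apply: eq_bigr => j _; rewrite !mxE.
Qed.

Lemma lead_wr_X k (n : 'I_k -> nat) :
  lead_coef (wronskian (fun j => 'X^(n j) : {poly R})) = vandermonde (fun j => (n j)%:R : R).
Proof.
pose W := \matrix_(i < k, j < k) ('X^(n j) : {poly R})^`(i).
pose F : 'M[R]_k := \matrix_(i < k, j < k) ((n j) ^_ i)%:R.
have E : diag_mx (\row_(i < k) 'X^i) *m W = map_mx polyC F *m diag_mx (\row_(j < k) 'X^(n j)).
  rewrite mul_diag_mx mul_mx_diag; apply/matrixP => i j; rewrite !mxE derivnXn.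
  case: (leqP i (n j)) => h.
    by rewrite mulrnAr -exprD subnKC // polyC_natr mulr_natl.
  by rewrite ffact_small // !mulr0n mulr0 mul0r.
have := congr1 (fun M => lead_coef (\det M)) E.
rewrite /= !det_mulmx !det_diag det_map_mx.
rewrite lead_coef_monicM; last by apply: monic_prod => i _; rewrite mxE monicXn.
rewrite lead_coef_Mmonic; last by apply: monic_prod => i _; rewrite mxE monicXn.
rewrite lead_coefC /F det_ffact /wronskian => ->.
by [].
Qed.

End Vdm.

Lemma ebar_uniq (S : comPzRingType) (h e : nat -> S) : h 0%N = 1 -> e 0%N = 1 ->
  (forall n, \sum_(t < n.+1) h t * e (n - t)%N = (n == 0)%:R) -> forall n, ebar h n = e n.
Proof.
move=> h0 e0 conv; elim/ltn_ind => n IH.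
case: n IH => [|m] IH; first by rewrite ebar0 e0.
have := conv m.+1; rewrite big_ord_recl h0 mul1r subn0 /= => /eqP.
rewrite addr_eq0 => /eqP ->; rewrite ebarS; congr (- _); apply: eq_bigr => t _.
by rewrite IH /bump /= ?add1n ?subSS // ltnS leq_subr.
Qed.

Section Spec.
Variable R : fieldType.
Hypothesis hR : [pchar R] =i pred0.

Definition Xs (n : nat) : {poly R} := 'X^n.

Lemma Xs_appell : is_appell Xs.
Proof. by split => [|n]; rewrite /Xs ?expr0 // derivXn. Qed.

Definition eX (n : nat) : {poly R} := ((n`!%:R)^-1 * (-1) ^+ n) *: 'X^n.

Lemma sum_sign_bin n : \sum_(t < n.+1) ((-1) ^+ (n - t) *+ 'C(n, t) : R) = (n == 0)%:R.
Proof.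
have := exprDn (-1 : R) 1 n; rewrite addNr expr0n => ->.
by apply: eq_bigr => t _; rewrite expr1n mulr1.
Qed.

Lemma conv_Xs n : \sum_(t < n.+1) hh Xs t * eX (n - t) = (n == 0)%:R.
Proof.
have term (t : 'I_n.+1) : hh Xs t * eX (n - t) =
    ((n`!%:R)^-1 * ((-1) ^+ (n - t) *+ 'C(n, t))) *: 'X^n.
  have tn : (t <= n)%N by rewrite -ltnS.
  rewrite /hh /Xs /eX -scalerAl -scalerAr scalerA -exprD subnKC //; congr (_ *: _).
  have := bin_fact tn; move/(congr1 (fun m => (m%:R : R))); rewrite !natrM => e.
  have h1 := fact_neq0 hR t; have h2 := fact_neq0 hR (n - t); have h3 := fact_neq0 hR n.
  rewrite -e -mulr_natr; field.
  by rewrite h1 h2 natf_neq0c // bin_gt0.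
rewrite (eq_bigr _ (fun t _ => term t)) -scaler_suml -mulr_sumr sum_sign_bin.
by case: n {term} => [|n] /=; rewrite ?fact0 ?invr1 ?mul1r ?expr0 ?scale1r // mulr0 scale0r.
Qed.

Lemma Bd_Xs n : Bd Xs n = 'X^n.
Proof.
rewrite /Bd (ebar_uniq (e := eX)) ?(hh0 Xs_appell) //; last exact: conv_Xs.
  rewrite /eX scalerA.
  have -> : (n`!%:R : R) * (-1) ^+ n * ((n`!%:R)^-1 * (-1) ^+ n) = 1.
    have h := fact_neq0 hR n.
    by rewrite mulrCA !mulrA mulVf // mul1r -expr2 sqrr_sign.
  by rewrite scale1r.
by rewrite /eX fact0 invr1 mul1r expr0 scale1r.
Qed.

End Spec.


Section Final.
Variable R : fieldType.
Hypothesis hR : [pchar R] =i pred0.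

Lemma A_part_sized (A : nat -> {poly R}) l' (s : nat) (e : size l' = s) :
  A_part A l' = (vandermonde (fun i : 'I_s => ((part_degs l' i)%:R : R)))^-1 *:
     wronskian (fun i : 'I_s => A (part_degs l' i)).
Proof. by subst s. Qed.

Lemma vdm_neq0 l (hs : sorted geq l) :
  vandermonde (fun i : 'I_(size l) => ((part_degs l i)%:R : R)) != 0.
Proof.
apply/prodf_neq0 => i _; apply/prodf_neq0 => j ij.
rewrite !pd_nd -natrB; last exact/ltnW/nd_mono.
by apply: (natf_neq0c hR); rewrite subn_gt0; apply: nd_mono.
Qed.

Lemma key_part l (hl : is_partition l) (A : nat -> {poly R}) (hA : is_appell A) :
  A_part A l = A_part (Bd A) (conj_part l).
Proof.
have hs : sorted geq l := (andP hl).1.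
have [c Hc] := key_wr hR hs.
have HX := Hc _ (Xs_appell R).
have E : (fun j : 'I_(head 0%N l) => Bd (@Xs R) (part_degs (conj_part l) j)) =
         (fun j => 'X^(part_degs (conj_part l) j)).
  by apply: functional_extensionality => j; rewrite Bd_Xs.
rewrite E /Xs in HX.
have := congr1 lead_coef HX; rewrite lead_coefM lead_coefC !lead_wr_X => Hv.
have size_conj : size (conj_part l) = head 0%N l by rewrite size_mkseq.
rewrite (A_part_sized (Bd A) size_conj) /A_part (Hc A hA) mul_polyC scalerA; congr (_ *: _).
have D0 := vdm_neq0 hs; rewrite Hv in D0 *.
have c0 : c != 0 by apply: contraNneq D0 => ->; rewrite mul0r.
by rewrite invfM mulrAC mulVf // mul1r.
Qed.

Lemma A_part_nil (A : nat -> {poly R}) : A_part A [::] = 1.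
Proof.
by rewrite /A_part /wronskian /vandermonde det_mx00 big_ord0 invr1 scale1r.
Qed.

Lemma A_part_single (A : nat -> {poly R}) n : A_part A [:: n] = A n.
Proof.
rewrite /A_part /wronskian /vandermonde det_mx11 big_ord1 big_pred0 ?invr1 ?scale1r; last first.
  by move=> [[|m] hm].
by rewrite /= mxE /part_degs /= addn0.
Qed.

Lemma conj_nseq n : (0 < n)%N -> conj_part (nseq n 1%N) = [:: n].
Proof.
case: n => // n _; rewrite /conj_part /= /mkseq /=.
by rewrite count_nseq /= mul1n.
Qed.

Lemma conj_single n : conj_part [:: n] = nseq n 1%N.
Proof.
apply: (@eq_from_nth _ 0%N); first by rewrite size_mkseq size_nseq.
move=> i; rewrite size_mkseq => ni; rewrite nth_mkseq // nth_nseq ni /=.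
by rewrite ni.
Qed.

Lemma part_nseq n : is_partition (nseq n 1%N).
Proof.
rewrite /is_partition; apply/andP; split; last by apply/allP => x /nseqP [->].
by elim: n => // [[|n]] //= IH.
Qed.

Lemma part_single n : (0 < n)%N -> is_partition [:: n].
Proof. by move=> n0; rewrite /is_partition /= n0. Qed.

Lemma dual_Bd (A : nat -> {poly R}) (hA : is_appell A) n : A_dual A n = Bd A n.
Proof.
case: n => [|n].
  by rewrite /A_dual /= A_part_nil; case: (Bd_appell hR hA).
rewrite /A_dual (key_part (part_nseq _) hA) conj_nseq //.
by rewrite A_part_single.
Qed.

End Final.


Section Eqm.
Variable R : fieldType.
Implicit Types p q : {poly R}.

Definition eqm n p q := exists r, p - q = r * 'X^n.

Lemma eqm_refl n p : eqm n p p.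
Proof. by exists 0; rewrite subrr mul0r. Qed.

Lemma eqm_sym n p q : eqm n p q -> eqm n q p.
Proof. by case=> r e; exists (- r); rewrite mulNr -e opprB. Qed.

Lemma eqm_trans n p q s : eqm n p q -> eqm n q s -> eqm n p s.
Proof. by case=> r1 e1 [r2 e2]; exists (r1 + r2); rewrite mulrDl -e1 -e2 addrA subrK. Qed.

Lemma eqm_add n p1 q1 p2 q2 : eqm n p1 q1 -> eqm n p2 q2 -> eqm n (p1 + p2) (q1 + q2).
Proof. by case=> r1 e1 [r2 e2]; exists (r1 + r2); rewrite mulrDl -e1 -e2; ring. Qed.

Lemma eqm_opp n p q : eqm n p q -> eqm n (- p) (- q).
Proof. by case=> r e; exists (- r); rewrite mulNr -e; ring. Qed.

Lemma eqm_mul n p1 q1 p2 q2 : eqm n p1 q1 -> eqm n p2 q2 -> eqm n (p1 * p2) (q1 * q2).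
Proof.
case=> r1 e1 [r2 e2]; exists (r1 * p2 + q1 * r2).
have -> : p1 * p2 - q1 * q2 = (p1 - q1) * p2 + q1 * (p2 - q2) by ring.
by rewrite e1 e2; ring.
Qed.

Lemma eqm_exp n p q m : eqm n p q -> eqm n (p ^+ m) (q ^+ m).
Proof.
move=> e; elim: m => [|m IH]; first exact: eqm_refl.
by rewrite !exprS; apply: eqm_mul.
Qed.

Lemma eqm_coef n p q : eqm n p q -> forall i, (i < n)%N -> p`_i = q`_i.
Proof.
case=> r e i ni; apply/eqP; rewrite -subr_eq0 -coefB e coefMXn ni //.
Qed.

Lemma eqm_coefP n p q : (forall i, (i < n)%N -> p`_i = q`_i) -> eqm n p q.
Proof.
move=> H; set d := p - q.
exists (\poly_(i < size d) d`_(i + n)).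
apply/polyP => i; rewrite coefMXn; case: ltnP => ni.
  by rewrite coefB H // subrr.
rewrite coef_poly subnK //; case: ltnP => // h.
by rewrite nth_default // (leq_trans h) // leq_subr.
Qed.

Lemma eqm_le m n p q : (m <= n)%N -> eqm n p q -> eqm m p q.
Proof.
move=> mn e; apply: eqm_coefP => i im; apply: (eqm_coef e); exact: leq_trans im mn.
Qed.

Lemma eqm_deriv n p q : eqm n.+1 p q -> eqm n p^`() q^`().
Proof.
case=> r e; exists (r^`() * 'X + r *+ n.+1).
by rewrite -derivB e derivM derivXn /= exprS; ring.
Qed.

Lemma eqm_compN n p q : eqm n p q -> eqm n (p \Po (- 'X)) (q \Po (- 'X)).
Proof.
case=> r e; exists ((r \Po (- 'X)) * (-1) ^+ n).
by rewrite -comp_polyB e comp_polyM comp_Xn_poly (exprNn 'X) mulrA.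
Qed.

Lemma coef_compN p i : (p \Po (- 'X))`_i = (-1) ^+ i * p`_i.
Proof.
have -> : p \Po (- 'X) = \poly_(k < size p) ((-1) ^+ k * p`_k).
  rewrite comp_polyE poly_def; apply: eq_bigr => k _.
  rewrite (exprNn 'X).
  have -> : (-1 : {poly R}) ^+ k = ((-1 : R) ^+ k)%:P by rewrite rmorphXn /= polyCN polyC1.
  by rewrite mul_polyC scalerA mulrC.
rewrite coef_poly; case: ltnP => // h.
by rewrite nth_default // mulr0.
Qed.

Hypothesis hR : [pchar R] =i pred0.

Definition Lg (M : nat) (u : {poly R}) :=
  \sum_(1 <= m < M.+1) (((-1) ^+ m.+1 / m%:R) *: u ^+ m).

Lemma signC k : ((-1 : R) ^+ k)%:P = (-1 : {poly R}) ^+ k.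
Proof. by rewrite rmorphXn /= polyCN polyC1. Qed.

Lemma Lg_deriv M u : (1 + u) * (Lg M u)^`() = u^`() * (1 - (- u) ^+ M).
Proof.
elim: M => [|M IH].
  by rewrite /Lg big_geq // deriv0 mulr0 expr0 subrr mulr0.
rewrite /Lg big_nat_recr //= -/(Lg M u) derivD derivZ deriv_exp /=.
rewrite -scaler_nat scalerA.
have -> : (-1) ^+ M.+2 / M.+1%:R * M.+1%:R = ((-1) ^+ M : R).
  rewrite mulfVK ?natf_neq0c // !exprS; ring.
rewrite mulrDr IH -mul_polyC signC !(exprNn u) exprS.
have H (a b c : {poly R}) : a * (1 - c * b ^+ M) + (1 + b) * (c * (a * b ^+ M)) =
   a * (1 - -1 * c * b ^+ M.+1) by rewrite exprS; ring.
exact: H.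
Qed.

End Eqm.


Section Cum.
Variable R : fieldType.
Hypothesis hR : [pchar R] =i pred0.
Variable A : nat -> {poly R}.
Hypothesis hA : is_appell A.

Definition al t : R := (A t).[0] / t`!%:R.
Definition gco n : R := \sum_(t < n.+1) al t * ((-1) ^+ (n - t) * al (n - t)).

Lemma al0 : al 0 = 1.
Proof. by case: hA => A0 _; rewrite /al A0 hornerC fact0 divr1. Qed.

Lemma Fcoef M i : (fA_trunc A M)`_i = if (i <= M)%N then al i else 0.
Proof. by rewrite coef_poly ltnS. Qed.

Lemma u_X M : eqm 1 (fA_trunc A M - 1) 0.
Proof.
apply: eqm_coefP => i; rewrite ltnS leqn0 => /eqP ->.
by rewrite coefB Fcoef coef1 coef0 al0 subrr.
Qed.

Lemma u_pow M m : eqm m ((fA_trunc A M - 1) ^+ m) 0.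
Proof.
case: (u_X M) => r e; rewrite subr0 in e; exists (r ^+ m).
by rewrite subr0 e exprMn expr1.
Qed.

Lemma appell_c_M k M : (k <= M)%N -> appell_c A k = k`!%:R * (Lg M (fA_trunc A M - 1))`_k.
Proof.
move=> kM; rewrite /appell_c -/(Lg k _); congr (_ * _).
rewrite /Lg [in RHS](big_cat_nat (n := k.+1)) //= coefD.
have -> : (\sum_(k.+1 <= m < M.+1) ((-1) ^+ m.+1 / m%:R) *: (fA_trunc A M - 1) ^+ m)`_k = 0.
  rewrite coef_sum big1_seq // => m /andP[_]; rewrite mem_index_iota => /andP[km _].
  by rewrite coefZ (eqm_coef (u_pow M m)) // coef0 mulr0.
rewrite addr0 !coef_sum; apply: eq_bigr => m _; rewrite !coefZ; congr (_ * _).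
apply: (eqm_coef (n := k.+1)) => //; apply: eqm_exp; apply: eqm_coefP => i ik.
by rewrite !coefB !Fcoef -ltnS ik (leq_trans _ kM).
Qed.

Local Notation F M := (fA_trunc A M).

Lemma FL M : eqm M (F M * (Lg M (F M - 1))^`()) (F M)^`().
Proof.
set u := F M - 1.
have Fu : F M = 1 + u by rewrite /u addrC subrK.
have -> : (F M)^`() = u^`() by rewrite Fu derivD deriv1p add0r.
rewrite Fu (Lg_deriv hR) -{2}[u^`()]mulr1; apply: eqm_mul; first exact: eqm_refl.
rewrite -{2}[1]subr0; apply: eqm_add; first exact: eqm_refl.
apply: eqm_opp; rewrite exprNn -[0](mulr0 ((-1) ^+ M)).
apply: eqm_mul; [exact: eqm_refl | exact: u_pow].
Qed.

Lemma GL M : eqm M (F M * (F M \Po (- 'X)))^`()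
  ((F M * (F M \Po (- 'X))) * ((Lg M (F M - 1))^`() - ((Lg M (F M - 1))^`() \Po (- 'X)))).
Proof.
set L1 := (Lg M (F M - 1))^`().
rewrite derivM deriv_comp derivN derivX.
apply: (@eqm_trans _ _ _ ((F M * L1) * (F M \Po (- 'X)) + F M * (((F M * L1) \Po (- 'X)) * -1))).
  apply: eqm_add; first by apply: eqm_mul; [exact/eqm_sym/FL | exact: eqm_refl].
  apply: eqm_mul; first exact: eqm_refl.
  apply: eqm_mul; last exact: eqm_refl.
  exact/eqm_compN/eqm_sym/FL.
rewrite comp_polyM; set P := F M \Po (- 'X); set Q := L1 \Po (- 'X).
have -> : F M * L1 * P + F M * (P * Q * -1) = F M * P * (L1 - Q) by ring.
exact: eqm_refl.
Qed.

Lemma Gcoef M n : (n <= M)%N -> (F M * (F M \Po (- 'X)))`_n = gco n.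
Proof.
move=> nM; rewrite coefM; apply: eq_bigr => j _.
have jn : (j <= n)%N by rewrite -ltnS.
by rewrite coef_compN !Fcoef (leq_trans jn nM) (leq_trans (leq_subr _ _) nM).
Qed.

Lemma Dcoef (L1 : {poly R}) j : (L1 - (L1 \Po (- 'X)))`_j = (1 - (-1) ^+ j) * L1`_j.
Proof. by rewrite coefB coef_compN; ring. Qed.

Lemma two_neq0 : (1 - (-1) : R) != 0.
Proof. by rewrite opprK (natf_neq0c hR (n := 2)). Qed.

Lemma dirA k : (0 < k)%N -> ~~ odd k -> (forall n, (0 < n)%N -> gco n = 0) -> appell_c A k = 0.
Proof.
move=> k0 ek H.
set G := F k * (F k \Po (- 'X)).
set D := (Lg k (F k - 1))^`() - ((Lg k (F k - 1))^`() \Po (- 'X)).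
have G1 : eqm k.+1 G 1.
  apply: eqm_coefP => i ik; rewrite /G Gcoef // coef1.
  case: i ik => [|i] ik; last by rewrite H.
  by rewrite /gco big_ord1 /= al0 expr0 !mul1r.
have G'0 : eqm k G^`() 0 by have := eqm_deriv G1; rewrite deriv1p.
have GD : eqm k (G * D) 0 := eqm_trans (eqm_sym (GL k)) G'0.
have D0 : eqm k D 0.
  apply: eqm_trans GD; rewrite -{1}[D]mul1r; apply: eqm_mul; last exact: eqm_refl.
  exact/eqm_sym/(eqm_le (leqnSn k)).
have := eqm_coef D0 (i := k.-1); rewrite ltn_predL k0 => /(_ isT).
have ok : odd k.-1 by move: ek; rewrite -{1}(prednK k0) /= negbK.
rewrite Dcoef coef0 coef_deriv -signr_odd prednK // ok /=.
move=> /eqP; rewrite mulf_eq0 (negbTE two_neq0) /= -mulr_natr mulf_eq0.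
rewrite (negbTE (natf_neq0c hR k0)) orbF => /eqP Lk.
by rewrite (appell_c_M (leqnn _)) Lk mulr0.
Qed.

Lemma dirB n : (0 < n)%N -> (forall k, (0 < k)%N -> ~~ odd k -> appell_c A k = 0) -> gco n = 0.
Proof.
move=> n0 H.
set G := F n * (F n \Po (- 'X)).
set D := (Lg n (F n - 1))^`() - ((Lg n (F n - 1))^`() \Po (- 'X)).
have D0 : eqm n D 0.
  apply: eqm_coefP => j jn; rewrite Dcoef coef0 coef_deriv -signr_odd.
  case oj: (odd j); last by rewrite expr0 subrr mul0r.
  have := H j.+1 (ltn0Sn j); rewrite /= oj => /(_ isT).
  rewrite (appell_c_M jn) => /eqP; rewrite mulf_eq0 (negbTE (fact_neq0 hR _)) /= => /eqP ->.
  by rewrite mul0rn mulr0.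
have G'0 : eqm n G^`() 0.
  apply: eqm_trans (GL n) _; rewrite -[0](mulr0 G); apply: eqm_mul => //; exact: eqm_refl.
have := eqm_coef G'0 (i := n.-1); rewrite ltn_predL n0 => /(_ isT).
rewrite coef0 coef_deriv prednK // /G Gcoef // => /eqP.
by rewrite -mulr_natr mulf_eq0 (negbTE (natf_neq0c hR n0)) orbF => /eqP.
Qed.

End Cum.


Section SelfDual.
Variable R : fieldType.
Hypothesis hR : [pchar R] =i pred0.
Variable A : nat -> {poly R}.
Hypothesis hA : is_appell A.

Local Notation hh := (hh A).
Definition et n : {poly R} := (-1) ^+ n *: hh n.
Definition Sx n := \sum_(t < n.+1) hh t * et (n - t).

Lemma const_deriv (p : {poly R}) : p^`() = 0 -> p = (p.[0])%:P.
Proof.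
move=> dp; apply/polyP => i; rewrite coefC horner_coef0.
case: i => [|i] //=; have := congr1 (fun q : {poly R} => q`_i) dp; rewrite coef_deriv coef0 => /eqP.
by rewrite -mulr_natr mulf_eq0 (negbTE (natf_neq0c hR (ltn0Sn i))) orbF => /eqP.
Qed.

Lemma Sx_deriv n : (Sx n.+1)^`() = 0.
Proof.
rewrite /Sx raddf_sum /=.
under eq_bigr => t _ do rewrite derivM.
rewrite big_split /= big_ord_recl [X in _ + X]big_ord_recr /= (hh0 hA) deriv1p mul0r add0r.
rewrite subnn [et 0]/et expr0 scale1r (hh0 hA) deriv1p mulr0 addr0.
have E1 (t : 'I_n.+1) : (hh (bump 0 t))^`() * et (n.+1 - bump 0 t) = hh t * et (n - t).
  by rewrite /bump /= add1n (hh_deriv hR hA) subSS.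
have E2 (t : 'I_n.+1) : hh (widen_ord (leqnSn n.+1) t) * (et (n.+1 - widen_ord (leqnSn n.+1) t))^`() =
    - (hh t * et (n - t)).
  rewrite /= (subSn (ltn_ord t : (t <= n)%N)) /et derivZ (hh_deriv hR hA) exprS.
  by rewrite mulN1r scaleNr mulrN.
rewrite (eq_bigr _ (fun t _ => E1 t)) (eq_bigr _ (fun t _ => E2 t)) sumrN subrr //.
Qed.

Lemma Sx_horner n : (Sx n).[0] = gco A n.
Proof.
rewrite /Sx horner_sum; apply: eq_bigr => t _.
by rewrite hornerM /et !hornerZ /hh /al !(mulrC _^-1).
Qed.

Lemma Sx0 : Sx 0 = 1.
Proof. by rewrite /Sx big_ord1 /et subnn expr0 scale1r (hh0 hA) mul1r. Qed.

Lemma A_hh n : A n = (n`!%:R : R) *: hh n.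
Proof. by rewrite /hh scalerA mulfV ?scale1r // fact_neq0. Qed.

Lemma A_et n : A n = ((n`!%:R : R) * (-1) ^+ n) *: et n.
Proof. by rewrite /et scalerA -mulrA -expr2 sqrr_sign mulr1 A_hh. Qed.

Lemma s_neq0 n : ((n`!%:R : R) * (-1) ^+ n) != 0.
Proof. by rewrite mulf_neq0 ?fact_neq0 ?signr_eq0. Qed.

Lemma partI : (forall n, A n = Bd A n) <-> (forall n, (0 < n)%N -> gco A n = 0).
Proof.
split.
  move=> H.
  have Heb n : ebar hh n = et n.
    by have := H n; rewrite A_et /Bd => /(scalerI (s_neq0 n)).
  move=> n n0; rewrite -Sx_horner.
  have -> : Sx n = (n == 0)%:R.
    rewrite /Sx -(ebar_conv (hh0 hA)); apply: eq_bigr => t _; by rewrite Heb.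
  by rewrite -(prednK n0) /= hornerC.
move=> H.
have Sxn n : Sx n = (n == 0)%:R.
  case: n => [|m]; first by rewrite Sx0.
  by rewrite (const_deriv (Sx_deriv m)) Sx_horner H.
have et0 : et 0 = 1 by rewrite /et expr0 scale1r (hh0 hA).
have Heb := ebar_uniq (hh0 hA) et0 Sxn.
by move=> n; rewrite A_et /Bd Heb.
Qed.

Lemma SD : (forall n, A n = Bd A n) <-> (forall n : nat, (0 < n)%N -> ~~ odd n -> appell_c A n = 0).
Proof.
rewrite partI; split => H n n0.
  by move=> en; apply: (dirA hR hA n0 en H).
exact: (dirB hR hA n0 H).
Qed.

End SelfDual.

Unset Implicit Arguments.

Theorem corollary5p7 (R : fieldType) (hR : [pchar R] =i pred0)
    (A : nat -> {poly R}) (hA : is_appell A) :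
  ((forall n : nat, A n = A_dual A n) <->
   (forall l : seq nat, is_partition l -> A_part A l = A_part A (conj_part l)))
  /\
  ((forall l : seq nat, is_partition l -> A_part A l = A_part A (conj_part l)) <->
   (forall n : nat, (0 < n)%N -> ~~ odd n -> appell_c A n = 0)).
Proof.
have DB := dual_Bd hR hA.
have ab : (forall n, A n = A_dual A n) <->
          (forall l, is_partition l -> A_part A l = A_part A (conj_part l)).
  split.
    move=> H l hl.
    have eqAB : A = Bd A by apply: functional_extensionality => n; rewrite H DB.
    by rewrite (key_part hR hl hA) -eqAB.
  move=> H [|n].
    by rewrite /A_dual /= A_part_nil; case: hA.
  have := H [:: n.+1] (part_single (ltn0Sn n)).
  by rewrite A_part_single conj_single.
split => //; rewrite -ab -(SD hR hA).
by split => H n; rewrite H ?DB // -DB.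
Qed.
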